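(* Let $M\in\mathbb{N}$, $M\ge2$, and let $r$ be a strong solution of the BVP. Then there exists $\delta>0$ such that $z$ is monotone on $(0,\delta)$. If, in addition, $r>0$ on $(0,\delta)$, then one of the following holds identically on $(0,\delta)$: (a) $\dot z\ge0$, equivalently $0<M^2-M\sqrt{M^2-1}\le\frac{R\dot r}{r}\le M^2+M\sqrt{M^2-1}$; (b) $\dot z\le0$ and $\left(\frac{r}{R}\right)^{\cdot}>0$; (c) $\dot z\le0$ and $\left(\frac{r}{R}\right)^{\cdot}<0$.
   Context: Fix constants $\gamma>0$, $s_0\ge0$, $\kappa\ge-\gamma s_0$ and a convex function $\rho\in C^\infty(\mathbb{R})$ with $\rho(s)=0$ for $s\le0$, $\rho(s)=\gamma s+\kappa$ for $s\ge s_0$, and $\rho=\rho_1$ on $[0,s_0]$ where $\rho_1$ is smooth and convex with $\rho_1(0)=0$, $\rho_1(s_0)=\gamma s_0+\kappa$. For $M\in\mathbb{N}\setminus\{0\}$ and a function $r$ on $(0,1]$ let $d(R)=\frac{Mr(R)\dot r(R)}{R}$ and $Lr(R)=\frac{M^2r}{R}-\dot r-R\ddot r$. A strong solution of the BVP is a function $r\in C([0,1])\cap C^\infty((0,1])$ with $Lr=M\rho''(d)\dot d\,r$ on $(0,1)$, $r(0)=0$ and $r(1)=1$. Let $f(s)=s\rho'(s)-\rho(s)$ and $z(R)=\frac{\dot r(R)^2}{2}+\frac{M^2r(R)^2}{2R^2}+f(d(R))$ for $R\in(0,1]$. *)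

(* Defs.v *)
From Stdlib Require Import Reals.
From Coquelicot Require Import Coquelicot.
Open Scope R_scope.

Definition smooth (f : R -> R) : Prop :=
  forall (n : nat) (x : R), ex_derive_n f n x.

Definition convex_fun (f : R -> R) : Prop :=
  forall x y t : R, 0 <= t <= 1 ->
    f (t * x + (1 - t) * y) <= t * f x + (1 - t) * f y.

Definition rho_hyp (gamma s0 kappa : R) (rho : R -> R) : Prop :=
  0 < gamma /\ 0 <= s0 /\ - (gamma * s0) <= kappa /\
  smooth rho /\ convex_fun rho /\
  (forall s, s <= 0 -> rho s = 0) /\
  (forall s, s0 <= s -> rho s = gamma * s + kappa) /\
  (exists rho1 : R -> R, smooth rho1 /\ convex_fun rho1 /\
     rho1 0 = 0 /\ rho1 s0 = gamma * s0 + kappa /\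
     (forall s, 0 <= s <= s0 -> rho s = rho1 s)).

(* r in C([0,1]) /\ C^infinity((0,1]).  C^infinity((0,1]) is encoded as:
   smooth on the open interval (0,1), continuous from the left at 1, and every
   derivative has a finite left limit at 1 (equivalent, by the mean value
   theorem, to having all one-sided derivatives at 1, continuous on (0,1]).
   Continuity on [0,1] additionally needs right-continuity at 0. *)
Definition regular_r (r : R -> R) : Prop :=
  (forall (n : nat) (x : R), 0 < x < 1 -> ex_derive_n r n x) /\
  filterlim r (at_right 0) (locally (r 0)) /\
  filterlim r (at_left 1) (locally (r 1)) /\
  (forall n : nat, exists l : R, filterlim (Derive_n r n) (at_left 1) (locally l)).

Definition dfun (M : nat) (r : R -> R) (x : R) : R :=
  INR M * r x * Derive r x / x.

Definition Lop (M : nat) (r : R -> R) (x : R) : R :=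
  INR M ^ 2 * r x / x - Derive r x - x * Derive_n r 2 x.

Definition strong_solution (rho : R -> R) (M : nat) (r : R -> R) : Prop :=
  regular_r r /\
  (forall x, 0 < x < 1 ->
     Lop M r x = INR M * Derive_n rho 2 (dfun M r x) * Derive (dfun M r) x * r x) /\
  r 0 = 0 /\ r 1 = 1.

Definition ffun (rho : R -> R) (s : R) : R := s * Derive rho s - rho s.

Definition zfun (rho : R -> R) (M : nat) (r : R -> R) (x : R) : R :=
  Derive r x ^ 2 / 2 + INR M ^ 2 * r x ^ 2 / (2 * x ^ 2) + ffun rho (dfun M r x).

Definition monotone_on_open (g : R -> R) (a b : R) : Prop :=
  (forall x y, a < x -> x <= y -> y < b -> g x <= g y) \/
  (forall x y, a < x -> x <= y -> y < b -> g y <= g x).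

(* Main.v *)
Require Import Defs.
From Stdlib Require Import Reals Lra Psatz Classical.
From Coquelicot Require Import Coquelicot.
Open Scope R_scope.

Lemma incr_of_deriv (f f' : R -> R) (a b : R) :
  a <= b -> (forall c, a <= c <= b -> is_derive f c (f' c)) ->
  (forall c, a <= c <= b -> 0 <= f' c) -> f a <= f b.
Proof.
  intros Hab Hd Hp. destruct (Req_dec a b) as [<-|Hne]; [lra|].
  destruct (MVT_cor2 f f' a b) as [c [Hc1 Hc2]]; [lra| |].
  - intros c Hc. apply is_derive_Reals. now apply Hd.
  - assert (0 <= f' c) by (apply Hp; lra). nra.
Qed.

Lemma cont_pt_of_derive (f : R -> R) x : ex_derive f x -> continuity_pt f x.
Proof.
  intros H. apply continuity_pt_filterlim. exact (ex_derive_continuous f x H).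
Qed.

Lemma cont_neg_local (f : R -> R) x : continuity_pt f x -> f x < 0 ->
  exists eta, 0 < eta /\ forall t, Rabs (t - x) < eta -> f t < 0.
Proof.
  intros Hc Hx. destruct (Hc (- f x)) as [alp [Ha H]]; [lra|].
  exists alp. split; [lra|]. intros t Ht.
  destruct (Req_dec t x) as [->|Hne]; [lra|].
  assert (H1 := H t). unfold dist in H1; simpl in H1; unfold R_dist in H1.
  assert (Rabs (f t - f x) < - f x).
  { apply H1. split; [split; [exact I| congruence] | exact Ht]. }
  apply Rabs_def2 in H0. lra.
Qed.

Lemma cont_pos_local (f : R -> R) x : continuity_pt f x -> 0 < f x ->
  exists eta, 0 < eta /\ forall t, Rabs (t - x) < eta -> 0 < f t.
Proof.
  intros Hc Hx. destruct (cont_neg_local (fun t => - f t) x) as [e [He H]].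
  - now apply continuity_pt_opp.
  - lra.
  - exists e. split; auto. intros t Ht. specialize (H t Ht). lra.
Qed.

Lemma deriv_neg_left (f : R -> R) x l : is_derive f x l -> l < 0 -> f x = 0 ->
  exists eta, 0 < eta /\ forall t, x - eta < t < x -> 0 < f t.
Proof.
  intros Hd Hl H0. apply is_derive_Reals in Hd.
  destruct (Hd (- l / 2)) as [del H]; [lra|].
  exists del. split; [apply cond_pos|]. intros t Ht.
  assert (Hh := H (t - x)). replace (x + (t - x)) with t in Hh by ring.
  rewrite H0 in Hh.
  assert (Habs: Rabs ((f t - 0) / (t - x) - l) < - l / 2).
  { apply Hh; [lra|]. rewrite Rabs_left; lra. }
  apply Rabs_def2 in Habs.
  assert (Hq: f t / (t - x) < 0) by (replace (f t) with (f t - 0) by ring; lra).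
  assert (t - x < 0) by lra.
  destruct (Rle_or_lt (f t) 0) as [Hf|Hf]; [|exact Hf].
  exfalso. assert (Hft: f t = (f t / (t - x)) * (t - x)) by (field; lra).
  nra.
Qed.

Lemma smooth_D1 f : smooth f -> forall c, is_derive f c (Derive f c).
Proof. intros Hs c. apply Derive_correct. exact (Hs 1%nat c). Qed.

Lemma smooth_D2 f : smooth f -> forall c, is_derive (Derive f) c (Derive_n f 2 c).
Proof. intros Hs c. apply Derive_correct. exact (Hs 2%nat c). Qed.

Lemma convex_D2_nonneg rho : smooth rho -> convex_fun rho -> forall s, 0 <= Derive_n rho 2 s.
Proof.
  intros Hs Hc s. destruct (Rle_or_lt 0 (Derive_n rho 2 s)) as [H|H]; [exact H|exfalso].
  assert (Hcont : continuity_pt (Derive_n rho 2) s).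
  { apply cont_pt_of_derive. exact (Hs 3%nat s). }
  destruct (cont_neg_local _ _ Hcont H) as [eta [He Hneg]].
  set (h := eta / 2).
  assert (Hd1 : forall a b, a <= b -> forall c, a <= c <= b -> derivable_pt_lim rho c (Derive rho c)).
  { intros a b _ c _. apply is_derive_Reals. now apply smooth_D1. }
  assert (Hd2 : forall a b, a <= b -> forall c, a <= c <= b -> derivable_pt_lim (Derive rho) c (Derive_n rho 2 c)).
  { intros a b _ c _. apply is_derive_Reals. now apply smooth_D2. }
  assert (0 < h) by (unfold h; lra).
  destruct (MVT_cor2 rho (Derive rho) s (s + h) ltac:(lra) (Hd1 s (s+h) ltac:(lra))) as [c1 [E1 Hc1]].
  destruct (MVT_cor2 rho (Derive rho) (s - h) s ltac:(lra) (Hd1 (s-h) s ltac:(lra))) as [c2 [E2 Hc2]].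
  destruct (MVT_cor2 (Derive rho) (Derive_n rho 2) c2 c1 ltac:(lra) (Hd2 c2 c1 ltac:(lra))) as [c3 [E3 Hc3]].
  assert (Hn3 : Derive_n rho 2 c3 < 0).
  { apply Hneg. unfold h in *. apply Rabs_def1; lra. }
  assert (Hconv := Hc (s + h) (s - h) (1/2)).
  replace (1 / 2 * (s + h) + (1 - 1 / 2) * (s - h)) with s in Hconv by field.
  assert (Hconv' : rho s <= 1 / 2 * rho (s + h) + (1 - 1 / 2) * rho (s - h)) by (apply Hconv; lra).
  assert (Derive rho c1 - Derive rho c2 < 0) by nra.
  nra.
Qed.

Definition Pf (M : nat) (r : R -> R) (x : R) : R :=
  x ^ 2 * Derive r x ^ 2 - 2 * INR M ^ 2 * x * r x * Derive r x + INR M ^ 2 * r x ^ 2.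

Definition dexpr (M : nat) (r : R -> R) (x : R) : R :=
  INR M * (Derive r x ^ 2 + r x * Derive_n r 2 x) / x - INR M * r x * Derive r x / x ^ 2.

Lemma dfun_deriv M r x : ex_derive r x -> ex_derive (Derive r) x -> x <> 0 ->
  is_derive (dfun M r) x (dexpr M r x).
Proof.
  intros H1 H2 Hx. unfold dfun, dexpr. auto_derive.
  - repeat split; auto.
  - change (Derive (fun y => r y) x) with (Derive r x).
    change (Derive (fun y => Derive r y) x) with (Derive_n r 2 x).
    field. auto.
Qed.

Lemma zfun_deriv rho M r x : ex_derive r x -> ex_derive (Derive r) x -> x <> 0 -> smooth rho ->
  is_derive (zfun rho M r) x
   (Derive r x * Derive_n r 2 x + INR M ^ 2 * r x * Derive r x / x ^ 2
    - INR M ^ 2 * r x ^ 2 / x ^ 3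
    + dfun M r x * Derive_n rho 2 (dfun M r x) * dexpr M r x).
Proof.
  intros H1 H2 Hx Hs. unfold zfun, ffun. unfold dfun at 1 2 3 4 5.
  auto_derive.
  - repeat split; auto; try exact (Hs 2%nat _); try exact (Hs 1%nat _). apply Rmult_integral_contrapositive_currified; [lra|]. apply Rmult_integral_contrapositive_currified; [auto|]. lra.
  - change (Derive (fun y => r y) x) with (Derive r x).
    change (Derive (fun y => Derive r y) x) with (Derive_n r 2 x).
    set (d := INR M * r x * Derive r x * / x).
    change (Derive (fun y => Derive rho y) d) with (Derive_n rho 2 d).
    change (Derive (fun y => rho y) d) with (Derive rho d).
    replace (dfun M r x) with d by (unfold dfun, d; field; auto).
    unfold dexpr. change (INR M * r x * Derive r x / x) with d. clearbody d. field. auto.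
Qed.

Lemma zfun_deriv_ode rho M r x : ex_derive r x -> ex_derive (Derive r) x -> 0 < x -> smooth rho ->
  Lop M r x = INR M * Derive_n rho 2 (dfun M r x) * Derive (dfun M r) x * r x ->
  is_derive (zfun rho M r) x (- Pf M r x / x ^ 3).
Proof.
  intros H1 H2 Hx Hs Hode.
  assert (Hz := zfun_deriv rho M r x H1 H2 ltac:(lra) Hs).
  rewrite (is_derive_unique _ _ _ (dfun_deriv M r x H1 H2 ltac:(lra))) in Hode.
  eapply is_derive_ext; [intros; reflexivity|].
  replace (- Pf M r x / x ^ 3) with
   (Derive r x * Derive_n r 2 x + INR M ^ 2 * r x * Derive r x / x ^ 2
    - INR M ^ 2 * r x ^ 2 / x ^ 3
    + dfun M r x * Derive_n rho 2 (dfun M r x) * dexpr M r x); [exact Hz|].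
  replace (dfun M r x * Derive_n rho 2 (dfun M r x) * dexpr M r x) with
    (Derive r x / x * (INR M * Derive_n rho 2 (dfun M r x) * dexpr M r x * r x))
    by (unfold dfun; field; lra).
  rewrite <- Hode. unfold Lop, Pf. field. lra.
Qed.

Definition Pd (M : nat) (r : R -> R) (x : R) : R :=
  2 * x * Derive r x ^ 2 + 2 * x ^ 2 * Derive r x * Derive_n r 2 x
  - 2 * INR M ^ 2 * x * Derive r x ^ 2 - 2 * INR M ^ 2 * x * r x * Derive_n r 2 x.

Lemma Pf_deriv M r x : ex_derive r x -> ex_derive (Derive r) x ->
  is_derive (Pf M r) x (Pd M r x).
Proof.
  intros H1 H2. unfold Pf, Pd. auto_derive.
  - repeat split; auto.
  - change (Derive (fun y => r y) x) with (Derive r x).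
    change (Derive (fun y => Derive r y) x) with (Derive_n r 2 x). ring.
Qed.

Lemma r2_solve M r x (rho2 : R) : 0 < x -> 0 <= rho2 ->
  Lop M r x = INR M * rho2 * dexpr M r x * r x ->
  Derive_n r 2 x =
   (INR M ^ 2 * r x - x * Derive r x
    - INR M ^ 2 * rho2 / x ^ 2 * r x * (x * Derive r x) * (x * Derive r x - r x))
   / (x ^ 2 * (1 + INR M ^ 2 * rho2 / x ^ 2 * r x ^ 2)).
Proof.
  intros Hx Hr Hode. unfold Lop, dexpr in Hode.
  set (m := INR M) in *. set (a := r x) in *. set (b := Derive r x) in *.
  set (c := Derive_n r 2 x) in *.
  assert (Hpos : 0 < 1 + m ^ 2 * rho2 / x ^ 2 * a ^ 2).
  { assert (0 <= m ^ 2 * rho2 / x ^ 2 * a ^ 2).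
    { apply Rmult_le_pos; [|nra]. unfold Rdiv. apply Rmult_le_pos; [nra|].
      apply Rlt_le, Rinv_0_lt_compat. nra. }
    lra. }
  assert (Hode' : m ^ 2 * a * x - b * x ^ 2 - x ^ 3 * c
     = m ^ 2 * rho2 * a * (b ^ 2 * x + a * c * x - a * b)).
  { transitivity ((m ^ 2 * a / x - b - x * c) * x ^ 2); [field; lra|].
    rewrite Hode. field. lra. }
  set (D := x ^ 2 * (1 + m ^ 2 * rho2 / x ^ 2 * a ^ 2)).
  set (N := m ^ 2 * a - x * b - m ^ 2 * rho2 / x ^ 2 * a * (x * b) * (x * b - a)).
  assert (HD : 0 < D) by (unfold D; apply Rmult_lt_0_compat; nra).
  assert (E : c * D * x - N * x = m ^ 2 * rho2 * a * (b ^ 2 * x + a * c * x - a * b)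
      - (m ^ 2 * a * x - b * x ^ 2 - x ^ 3 * c)) by (unfold D, N; field; lra).
  rewrite Hode' in E.
  assert (E2 : c * D = N).
  { apply (Rmult_eq_reg_r x); lra. }
  rewrite <- E2. field. lra.
Qed.

Lemma cross_sign M r x rho2 : 0 < x -> 0 <= rho2 -> 2 <= INR M ->
  Lop M r x = INR M * rho2 * dexpr M r x * r x ->
  Pf M r x = 0 -> ~ (r x = 0 /\ Derive r x = 0) -> Pd M r x < 0.
Proof.
  intros Hx Hr HM Hode HP Hnz.
  assert (Hc := r2_solve M r x rho2 Hx Hr Hode).
  unfold Pf in HP. unfold Pd. rewrite Hc.
  set (m := INR M) in *. set (a := r x) in *. set (b := Derive r x) in *.
  set (g := m ^ 2 * rho2 / x ^ 2).
  assert (Hg : 0 <= g).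
  { unfold g, Rdiv. apply Rmult_le_pos; [nra|]. apply Rlt_le, Rinv_0_lt_compat. nra. }
  assert (Hpos : 0 < 1 + g * a ^ 2) by nra.
  set (w := x * b).
  set (P := w ^ 2 - 2 * m ^ 2 * a * w + m ^ 2 * a ^ 2).
  assert (HP' : P = 0) by (unfold P, w; rewrite <- HP; ring).
  set (Q := 2 * x * b ^ 2 +
   2 * x ^ 2 * b *
   ((m ^ 2 * a - x * b - m ^ 2 * rho2 / x ^ 2 * a * (x * b) * (x * b - a)) /
    (x ^ 2 * (1 + m ^ 2 * rho2 / x ^ 2 * a ^ 2))) - 2 * m ^ 2 * x * b ^ 2 -
   2 * m ^ 2 * x * a *
   ((m ^ 2 * a - x * b - m ^ 2 * rho2 / x ^ 2 * a * (x * b) * (x * b - a)) /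
    (x ^ 2 * (1 + m ^ 2 * rho2 / x ^ 2 * a ^ 2)))).
  assert (K : x * Q * (1 + g * a ^ 2) =
     - 2 * m ^ 2 * P - 2 * g * a * w * P - 4 * (m ^ 2 - 1) * (m ^ 2 * a * w + g * a ^ 2 * w ^ 2)).
  { unfold Q, P, w, g. field. split; [lra|]. assert (0 <= m ^ 2 * rho2 * a ^ 2) by (apply Rmult_le_pos; [apply Rmult_le_pos|]; nra). nra. }
  rewrite HP' in K.
  assert (Haw : m ^ 2 * a * w = (w ^ 2 + m ^ 2 * a ^ 2) / 2).
  { unfold P in HP'. lra. }
  assert (Hnz' : 0 < w ^ 2 + m ^ 2 * a ^ 2).
  { destruct (Req_dec a 0) as [Ha|Ha].
    - assert (b <> 0) by tauto. unfold w. assert (0 < (x*b)^2).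
      { apply pow2_gt_0. apply Rmult_integral_contrapositive_currified; lra. }
      nra.
    - assert (0 < a ^ 2) by (apply pow2_gt_0; auto). assert (0 <= w ^ 2) by nra. assert (0 < m ^ 2 * a ^ 2) by (apply Rmult_lt_0_compat; nra). lra. }
  assert (x * Q * (1 + g * a ^ 2) < 0).
  { rewrite K, Haw. assert (0 <= g * a ^ 2 * w ^ 2) by (apply Rmult_le_pos; [apply Rmult_le_pos|]; nra).
    assert (0 < m ^ 2 - 1) by nra.
    assert (0 < (m ^ 2 - 1) * ((w ^ 2 + m ^ 2 * a ^ 2) / 2 + g * a ^ 2 * w ^ 2)) by (apply Rmult_lt_0_compat; lra).
    lra. }
  assert (HQ : Q < 0).
  { destruct (Rle_or_lt 0 Q) as [H0|H0]; [|exact H0].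
    assert (0 <= x * Q * (1 + g * a ^ 2)) by (apply Rmult_le_pos; [apply Rmult_le_pos|]; lra). lra. }
  exact HQ.
Qed.

Definition gco rho M r y := INR M ^ 2 * Derive_n rho 2 (dfun M r y) / y ^ 2.
Definition alco rho M r y :=
  (INR M ^ 2 - gco rho M r y * (y * Derive r y) * (y * Derive r y - r y))
  / (y ^ 2 * (1 + gco rho M r y * r y ^ 2)).
Definition beco rho M r y := - y / (y ^ 2 * (1 + gco rho M r y * r y ^ 2)).

Definition ODEat rho M r x :=
  Lop M r x = INR M * Derive_n rho 2 (dfun M r x) * Derive (dfun M r) x * r x.

Lemma gco_nonneg rho M r y : 0 < y -> (forall s, 0 <= Derive_n rho 2 s) -> 0 <= gco rho M r y.
Proof.
  intros Hy Hr. unfold gco, Rdiv. apply Rmult_le_pos; [apply Rmult_le_pos; [apply pow2_ge_0|apply Hr]|].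
  apply Rlt_le, Rinv_0_lt_compat. nra.
Qed.

Lemma ode_dexpr rho M r x : ex_derive r x -> ex_derive (Derive r) x -> 0 < x -> ODEat rho M r x ->
  Lop M r x = INR M * Derive_n rho 2 (dfun M r x) * dexpr M r x * r x.
Proof.
  intros H1 H2 Hx H. unfold ODEat in H.
  rewrite (is_derive_unique _ _ _ (dfun_deriv M r x H1 H2 ltac:(lra))) in H. exact H.
Qed.

Lemma r2_lin rho M r y : ex_derive r y -> ex_derive (Derive r) y -> 0 < y ->
  (forall s, 0 <= Derive_n rho 2 s) -> ODEat rho M r y ->
  Derive_n r 2 y = alco rho M r y * r y + beco rho M r y * Derive r y.
Proof.
  intros H1 H2 Hy Hr Hode.
  rewrite (r2_solve M r y (Derive_n rho 2 (dfun M r y)) Hy (Hr _) (ode_dexpr rho M r y H1 H2 Hy Hode)).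
  assert (Hg := gco_nonneg rho M r y Hy Hr).
  unfold alco, beco. fold (gco rho M r y).
  assert (0 <= gco rho M r y * r y ^ 2) by (apply Rmult_le_pos; [auto|apply pow2_ge_0]).
  unfold gco in *. field. split; [lra|]. assert (0 <= INR M ^ 2 * Derive_n rho 2 (dfun M r y) * r y ^ 2) by (apply Rmult_le_pos; [apply Rmult_le_pos; [apply pow2_ge_0|apply Hr]|apply pow2_ge_0]). nra.
Qed.

Definition kco rho M r y := 3 + alco rho M r y ^ 2 + beco rho M r y ^ 2.

Lemma kco_cont rho M r y : smooth rho -> (forall s, 0 <= Derive_n rho 2 s) ->
  ex_derive r y -> ex_derive (Derive r) y -> 0 < y -> continuity_pt (kco rho M r) y.
Proof.
  intros Hs Hr H1 H2 Hy. apply cont_pt_of_derive.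
  assert (Hg : forall y, 0 < y -> 0 <= gco rho M r y) by (intros; apply gco_nonneg; auto).
  assert (Hpos : 0 < 1 + gco rho M r y * r y ^ 2).
  { assert (0 <= gco rho M r y * r y ^ 2) by (apply Rmult_le_pos; [auto|apply pow2_ge_0]). lra. }
  unfold kco, alco, beco, gco in *. unfold dfun. auto_derive.
  repeat split; auto; try exact (Hs 3%nat _); try lra.
  all: unfold dfun in Hpos.
  all: try (apply Rmult_integral_contrapositive_currified; [apply pow_nonzero; lra|]).
  all: try (rewrite Rmult_1_r; lra).
  all: try lra.
  all: apply Rmult_integral_contrapositive_currified; [apply Rgt_not_eq; nra|].
  all: apply Rgt_not_eq; first [nra | exact Hpos].
Qed.

Lemma gron_ineq a b al be K : 3 + al ^ 2 + be ^ 2 <= K ->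
  0 <= 2 * a * b + 2 * b * (al * a + be * b) + K * (a ^ 2 + b ^ 2).
Proof.
  intros HK.
  assert (h1 : - (a ^ 2 + b ^ 2) <= 2 * a * b) by (assert (0 <= (a + b) ^ 2) by apply pow2_ge_0; nra).
  assert (h2 : - (al ^ 2 * a ^ 2 + b ^ 2) <= 2 * al * a * b) by (assert (0 <= (al * a + b) ^ 2) by apply pow2_ge_0; nra).
  assert (h3 : - ((1 + be ^ 2) * b ^ 2) <= 2 * be * b ^ 2) by (assert (0 <= ((1 + be) * b) ^ 2) by apply pow2_ge_0; nra).
  assert (h4 : (3 + al ^ 2 + be ^ 2) * (a ^ 2 + b ^ 2) <= K * (a ^ 2 + b ^ 2))
    by (apply Rmult_le_compat_r; nra).
  assert (h5 : 0 <= al ^ 2 * b ^ 2) by nra.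
  assert (h6 : 0 <= be ^ 2 * a ^ 2) by nra.
  nra.
Qed.

Lemma double_zero rho M r x0 : smooth rho -> (forall s, 0 <= Derive_n rho 2 s) ->
  (forall y, 0 < y < 1 -> ex_derive r y /\ ex_derive (Derive r) y) ->
  (forall y, 0 < y < 1 -> ODEat rho M r y) ->
  0 < x0 < 1 -> r x0 = 0 -> Derive r x0 = 0 ->
  forall x, 0 < x <= x0 -> r x = 0 /\ Derive r x = 0.
Proof.
  intros Hs Hr Hd Hode Hx0 Hr0 Hd0 x Hx.
  destruct (Req_dec x x0) as [->|Hne]; [auto|].
  destruct (continuity_ab_maj (kco rho M r) x x0) as [ym [Hym Hym2]]; [lra| |].
  { intros c Hc. destruct (Hd c ltac:(lra)). apply kco_cont; auto; lra. }
  set (K := kco rho M r ym).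
  set (h := fun y => (r y ^ 2 + Derive r y ^ 2) * exp (K * y)).
  assert (Hmono : h x <= h x0).
  { apply (incr_of_deriv h (fun y => (2 * r y * Derive r y + 2 * Derive r y * Derive_n r 2 y
          + K * (r y ^ 2 + Derive r y ^ 2)) * exp (K * y))); [lra| |].
    - intros c Hc. destruct (Hd c ltac:(lra)) as [H1 H2]. unfold h. auto_derive.
      + repeat split; auto.
      + change (Derive (fun y => r y) c) with (Derive r c).
        change (Derive (fun y => Derive r y) c) with (Derive_n r 2 c). ring.
    - intros c Hc. destruct (Hd c ltac:(lra)) as [H1 H2].
      apply Rmult_le_pos; [|apply Rlt_le, exp_pos].
      rewrite (r2_lin rho M r c H1 H2 ltac:(lra) Hr (Hode c ltac:(lra))).
      apply gron_ineq. unfold K. apply (Hym c Hc). }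
  unfold h in Hmono. rewrite Hr0, Hd0 in Hmono.
  assert (He := exp_pos (K * x)).
  assert (Hz : r x ^ 2 + Derive r x ^ 2 <= 0) by nra.
  split; nra.
Qed.

Lemma claimC rho M r : smooth rho -> (forall s, 0 <= Derive_n rho 2 s) -> 2 <= INR M ->
  (forall y, 0 < y < 1 -> ex_derive r y /\ ex_derive (Derive r) y) ->
  (forall y, 0 < y < 1 -> ODEat rho M r y) ->
  (forall y, 0 < y < 1 -> ~ (r y = 0 /\ Derive r y = 0)) ->
  forall x1 x2, 0 < x1 -> x1 < x2 -> x2 < 1 -> Pf M r x1 < 0 -> Pf M r x2 < 0.
Proof.
  intros Hs Hr HM Hd Hode Hnz x1 x2 H1 H12 H2 Hp1.
  destruct (Rlt_or_le (Pf M r x2) 0) as [Hp2|Hp2]; [exact Hp2|exfalso].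
  set (P := Pf M r).
  assert (Hcont : forall y, 0 < y < 1 -> continuity_pt P y).
  { intros y Hy. destruct (Hd y Hy) as [Ha Hb]. apply cont_pt_of_derive.
    eexists. apply Pf_deriv; auto. }
  set (S := fun y => x1 <= y <= x2 /\ forall t, x1 <= t <= y -> P t < 0).
  destruct (completeness S) as [s [Hub Hlub]].
  { exists x2. intros y [Hy _]. lra. }
  { exists x1. split; [lra|]. intros t Ht. replace t with x1 by lra. exact Hp1. }
  assert (Hs1 : x1 <= s).
  { apply Hub. split; [lra|]. intros t Ht. replace t with x1 by lra. exact Hp1. }
  assert (Hs2 : s <= x2). { apply Hlub. intros y [Hy _]. lra. }
  assert (Hi : forall t, x1 <= t < s -> P t < 0).
  { intros t Ht. destruct (Rlt_or_le (P t) 0) as [Hn|Hn]; [exact Hn|exfalso].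
    assert (s <= t); [|lra].
    apply Hlub. intros y [Hy Hy2]. destruct (Rle_or_lt y t) as [Hyt|Hyt]; [exact Hyt|].
    assert (P t < 0) by (apply Hy2; lra). lra. }
  assert (Hii : 0 <= P s).
  { destruct (Rlt_or_le (P s) 0) as [Hn|Hn]; [exfalso|exact Hn].
    destruct (cont_neg_local P s (Hcont s ltac:(lra)) Hn) as [eta [He Hloc]].
    set (y := Rmin x2 (s + eta / 2)).
    assert (Sy : S y).
    { split; [unfold y; split; [apply Rmin_glb; lra | apply Rmin_l]|].
      intros t Ht. destruct (Rlt_or_le t s) as [Hts|Hts]; [apply Hi; lra|].
      apply Hloc. assert (t <= s + eta / 2) by (pose proof (Rmin_r x2 (s + eta/2)); unfold y in Ht; lra).
      apply Rabs_def1; lra. }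
    assert (Hys : y <= s) by (apply Hub; exact Sy).
    unfold y in Hys.
    destruct (Rle_or_lt x2 s) as [Hx2s|Hx2s].
    - assert (s = x2) by lra. subst s. unfold P in Hn. lra.
    - assert (Rmin x2 (s + eta / 2) > s) by (apply Rmin_glb_lt; lra). lra. }
  assert (Hiii : x1 < s).
  { destruct (Req_dec x1 s) as [Heq|Heq]; [|lra]. rewrite <- Heq in Hii. unfold P in Hii. lra. }
  assert (Hiv : P s <= 0).
  { destruct (Rle_or_lt (P s) 0) as [Hn|Hn]; [exact Hn|exfalso].
    destruct (cont_pos_local P s (Hcont s ltac:(lra)) Hn) as [eta [He Hloc]].
    set (t := Rmax x1 (s - eta / 2)).
    assert (Ht1 : x1 <= t) by apply Rmax_l.
    assert (Ht2 : s - eta / 2 <= t) by apply Rmax_r.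
    assert (Ht3 : t < s) by (unfold t; apply Rmax_lub_lt; lra).
    assert (P t < 0) by (apply Hi; lra).
    assert (0 < P t) by (apply Hloc; apply Rabs_def1; lra). lra. }
  assert (Hz : P s = 0) by lra.
  destruct (Hd s ltac:(lra)) as [Ha Hb].
  assert (Hneg : Pd M r s < 0).
  { apply (cross_sign M r s (Derive_n rho 2 (dfun M r s))); auto; try lra.
    - apply ode_dexpr; auto; try lra. apply Hode; lra.
    - apply Hnz; lra. }
  destruct (deriv_neg_left P s (Pd M r s) (Pf_deriv M r s Ha Hb) Hneg Hz) as [eta [He Hloc]].
  set (t := Rmax x1 (s - eta / 2)).
  assert (Ht1 : x1 <= t) by apply Rmax_l.
  assert (Ht2 : s - eta / 2 <= t) by apply Rmax_r.
  assert (Ht3 : t < s) by (unfold t; apply Rmax_lub_lt; lra).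
  assert (P t < 0) by (apply Hi; lra).
  assert (0 < P t) by (apply Hloc; lra). lra.
Qed.

Lemma sign_near0 rho M r : smooth rho -> (forall s, 0 <= Derive_n rho 2 s) -> 2 <= INR M ->
  (forall y, 0 < y < 1 -> ex_derive r y /\ ex_derive (Derive r) y) ->
  (forall y, 0 < y < 1 -> ODEat rho M r y) ->
  exists delta, 0 < delta <= 1 /\
    ((forall x, 0 < x < delta -> 0 <= Pf M r x) \/ (forall x, 0 < x < delta -> Pf M r x <= 0)).
Proof.
  intros Hs Hr HM Hd Hode.
  destruct (classic (exists x0, 0 < x0 < 1 /\ r x0 = 0 /\ Derive r x0 = 0)) as [[x0 [Hx0 [Ha Hb]]]|Hno].
  - exists x0. split; [lra|]. left. intros x Hx.
    destruct (double_zero rho M r x0 Hs Hr Hd Hode Hx0 Ha Hb x ltac:(lra)) as [E1 E2].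
    unfold Pf. rewrite E1, E2. lra.
  - assert (Hnz : forall y, 0 < y < 1 -> ~ (r y = 0 /\ Derive r y = 0)).
    { intros y Hy [E1 E2]. apply Hno. exists y. auto. }
    assert (HC := claimC rho M r Hs Hr HM Hd Hode Hnz).
    destruct (classic (forall x, 0 < x < 1 -> 0 <= Pf M r x)) as [Hall|Hnall].
    + exists 1. split; [lra|]. left. exact Hall.
    + apply not_all_ex_not in Hnall. destruct Hnall as [x0 Hx0].
      apply imply_to_and in Hx0. destruct Hx0 as [Hx0 Hp0]. apply Rnot_le_lt in Hp0.
      destruct (classic (forall x, 0 < x < x0 -> Pf M r x < 0)) as [Hall2|Hnall2].
      * exists x0. split; [lra|]. right. intros x Hx. apply Rlt_le, Hall2; exact Hx.
      * apply not_all_ex_not in Hnall2. destruct Hnall2 as [x1 Hx1].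
        apply imply_to_and in Hx1. destruct Hx1 as [Hx1 Hp1]. apply Rnot_lt_le in Hp1.
        exists x1. split; [lra|]. left. intros x Hx.
        destruct (Rle_or_lt 0 (Pf M r x)) as [H|H]; [exact H|].
        assert (Pf M r x1 < 0) by (apply (HC x x1); lra). lra.
Qed.

Lemma mono_sign (f f' : R -> R) d :
  (forall c, 0 < c < d -> is_derive f c (f' c)) ->
  ((forall c, 0 < c < d -> 0 <= f' c) \/ (forall c, 0 < c < d -> f' c <= 0)) ->
  monotone_on_open f 0 d.
Proof.
  intros Hd [Hp|Hn].
  - left. intros x y Hx Hxy Hy. apply (incr_of_deriv f f'); auto.
    + intros c Hc. apply Hd; lra.
    + intros c Hc. apply Hp; lra.
  - right. intros x y Hx Hxy Hy.
    assert (- f x <= - f y); [|lra].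
    apply (incr_of_deriv (fun t => - f t) (fun t => - f' t) x y); try lra.
    + intros c Hc. exact (is_derive_opp f c (f' c) (Hd c ltac:(lra))).
    + intros c Hc. assert (f' c <= 0) by (apply Hn; lra). lra.
Qed.

Lemma ubounds m x a b : 2 <= m -> 0 < x -> 0 < a ->
  x ^ 2 * b ^ 2 - 2 * m ^ 2 * x * a * b + m ^ 2 * a ^ 2 <= 0 ->
  0 < m ^ 2 - m * sqrt (m ^ 2 - 1) /\
  m ^ 2 - m * sqrt (m ^ 2 - 1) <= x * b / a /\
  x * b / a <= m ^ 2 + m * sqrt (m ^ 2 - 1).
Proof.
  intros Hm Hx Ha HP.
  set (S := sqrt (m ^ 2 - 1)).
  assert (HS0 : 0 <= S) by apply sqrt_pos.
  assert (HS2 : S * S = m ^ 2 - 1) by (apply sqrt_sqrt; nra).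
  set (u := x * b / a).
  assert (Hxb : x * b = u * a) by (unfold u; field; lra).
  assert (Hq : a ^ 2 * (u ^ 2 - 2 * m ^ 2 * u + m ^ 2) <= 0).
  { replace (a ^ 2 * (u ^ 2 - 2 * m ^ 2 * u + m ^ 2)) with
      ((x * b) ^ 2 - 2 * m ^ 2 * a * (x * b) + m ^ 2 * a ^ 2) by (rewrite Hxb; ring).
    replace ((x * b) ^ 2 - 2 * m ^ 2 * a * (x * b) + m ^ 2 * a ^ 2) with
      (x ^ 2 * b ^ 2 - 2 * m ^ 2 * x * a * b + m ^ 2 * a ^ 2) by ring. exact HP. }
  assert (Ha2 : 0 < a ^ 2) by nra.
  assert (Hq2 : u ^ 2 - 2 * m ^ 2 * u + m ^ 2 <= 0).
  { destruct (Rle_or_lt (u ^ 2 - 2 * m ^ 2 * u + m ^ 2) 0) as [H|H]; [exact H|].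
    assert (0 < a ^ 2 * (u ^ 2 - 2 * m ^ 2 * u + m ^ 2)) by (apply Rmult_lt_0_compat; lra). lra. }
  assert (Hsq : (u - m ^ 2) ^ 2 <= (m * S) ^ 2).
  { replace ((m * S) ^ 2) with (m ^ 2 * (S * S)) by ring. rewrite HS2. nra. }
  assert (HmS : 0 <= m * S) by nra.
  split; [|split].
  - assert (S < m).
    { destruct (Rlt_or_le S m) as [H|H]; [exact H|]. nra. }
    nra.
  - destruct (Rle_or_lt (m ^ 2 - m * S) u) as [H|H]; [exact H|].
    assert ((m * S) ^ 2 < (u - m ^ 2) ^ 2) by nra. lra.
  - destruct (Rle_or_lt u (m ^ 2 + m * S)) as [H|H]; [exact H|].
    assert ((m * S) ^ 2 < (u - m ^ 2) ^ 2) by nra. lra.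
Qed.

Lemma v_nonzero m x a b : 2 <= m -> 0 < a ->
  0 <= x ^ 2 * b ^ 2 - 2 * m ^ 2 * x * a * b + m ^ 2 * a ^ 2 -> x * b - a <> 0.
Proof.
  intros Hm Ha HP Hv.
  assert (Hxb : x * b = a) by lra.
  replace (x ^ 2 * b ^ 2 - 2 * m ^ 2 * x * a * b + m ^ 2 * a ^ 2) with
    ((x * b) ^ 2 - 2 * m ^ 2 * a * (x * b) + m ^ 2 * a ^ 2) in HP by ring.
  rewrite Hxb in HP.
  assert (0 < a ^ 2) by nra. assert (4 <= m ^ 2) by nra. nra.
Qed.

Theorem lemma2p5 (gamma s0 kappa : R) (rho : R -> R) (M : nat) (r : R -> R) :
  rho_hyp gamma s0 kappa rho ->
  (2 <= M)%nat ->
  strong_solution rho M r ->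
  exists delta : R, 0 < delta <= 1 /\
    monotone_on_open (zfun rho M r) 0 delta /\
    ((forall x, 0 < x < delta -> 0 < r x) ->
      ((forall x, 0 < x < delta -> 0 <= Derive (zfun rho M r) x) /\
       (forall x, 0 < x < delta ->
          0 < INR M ^ 2 - INR M * sqrt (INR M ^ 2 - 1) /\
          INR M ^ 2 - INR M * sqrt (INR M ^ 2 - 1) <= x * Derive r x / r x /\
          x * Derive r x / r x <= INR M ^ 2 + INR M * sqrt (INR M ^ 2 - 1)))
      \/
      ((forall x, 0 < x < delta -> Derive (zfun rho M r) x <= 0) /\
       (forall x, 0 < x < delta -> 0 < Derive (fun y => r y / y) x))
      \/
      ((forall x, 0 < x < delta -> Derive (zfun rho M r) x <= 0) /\
       (forall x, 0 < x < delta -> Derive (fun y => r y / y) x < 0))).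
Proof.
  intros Hrho HM Hsol.
  destruct Hrho as [_ [_ [_ [Hs [Hcv _]]]]].
  assert (Hr2 := convex_D2_nonneg rho Hs Hcv).
  destruct Hsol as [[Hreg _] [Hode _]].
  assert (HM' : 2 <= INR M) by (replace 2 with (INR 2) by (simpl; ring); apply le_INR; exact HM).
  assert (Hd : forall y, 0 < y < 1 -> ex_derive r y /\ ex_derive (Derive r) y).
  { intros y Hy. split; [exact (Hreg 1%nat y Hy) | exact (Hreg 2%nat y Hy)]. }
  assert (Hode' : forall y, 0 < y < 1 -> ODEat rho M r y) by (intros; apply Hode; auto).
  destruct (sign_near0 rho M r Hs Hr2 HM' Hd Hode') as [delta [Hdel Hsign]].
  assert (Hz : forall x, 0 < x < delta -> is_derive (zfun rho M r) x (- Pf M r x / x ^ 3)).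
  { intros x Hx. destruct (Hd x ltac:(lra)) as [H1 H2].
    apply zfun_deriv_ode; auto; try lra. apply Hode; lra. }
  assert (Hz' : forall x, 0 < x < delta -> Derive (zfun rho M r) x = - Pf M r x / x ^ 3).
  { intros x Hx. apply is_derive_unique. auto. }
  assert (Hsgn : forall x p, 0 < x -> (0 <= p -> - p / x ^ 3 <= 0) /\ (p <= 0 -> 0 <= - p / x ^ 3)).
  { intros x p Hx. assert (0 < / x ^ 3) by (apply Rinv_0_lt_compat; apply pow_lt; lra).
    unfold Rdiv. split; intros; nra. }
  exists delta. split; [exact Hdel|]. split.
  { apply (mono_sign _ (fun x => - Pf M r x / x ^ 3)); [exact Hz|].
    destruct Hsign as [Hp|Hp]; [right|left]; intros c Hc; specialize (Hp c Hc);
      destruct (Hsgn c (Pf M r c) ltac:(lra)); auto. }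
  intros Hpos. destruct Hsign as [Hp|Hp].
  -
    assert (Hzn : forall x, 0 < x < delta -> Derive (zfun rho M r) x <= 0).
    { intros x Hx. rewrite Hz'; auto. apply (Hsgn x (Pf M r x) ltac:(lra)). auto. }
    set (v := fun y => y * Derive r y - r y).
    assert (Hvd : forall x, 0 < x < delta -> Derive (fun y => r y / y) x = v x / x ^ 2).
    { intros x Hx. destruct (Hd x ltac:(lra)) as [H1 H2]. apply is_derive_unique.
      unfold v. auto_derive.
      - repeat split; auto; lra.
      - change (Derive (fun y => r y) x) with (Derive r x). field. lra. }
    assert (Hvnz : forall x, 0 < x < delta -> v x <> 0).
    { intros x Hx. unfold v. apply (v_nonzero (INR M)); [exact HM' | apply Hpos; lra | apply Hp; lra]. }
    assert (Hvc : forall x, 0 < x < delta -> continuity_pt v x).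
    { intros x Hx. destruct (Hd x ltac:(lra)) as [H1 H2]. apply cont_pt_of_derive.
      unfold v. auto_derive. repeat split; auto. }
    assert (Hdiv : forall x, 0 < x -> (0 < v x -> 0 < v x / x ^ 2) /\ (v x < 0 -> v x / x ^ 2 < 0)).
    { intros x Hx. assert (0 < / x ^ 2) by (apply Rinv_0_lt_compat; apply pow_lt; lra).
      unfold Rdiv. split; intros; nra. }
    destruct (classic (forall x, 0 < x < delta -> 0 < v x)) as [Hall|Hnall].
    + right. left. split; [exact Hzn|]. intros x Hx. rewrite Hvd; auto.
      apply (Hdiv x ltac:(lra)). auto.
    + right. right. split; [exact Hzn|].
      apply not_all_ex_not in Hnall. destruct Hnall as [x1 Hx1].
      apply imply_to_and in Hx1. destruct Hx1 as [Hx1 Hv1].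
      assert (Hv1' : v x1 < 0).
      { destruct (Rle_or_lt 0 (v x1)) as [H|H]; [|exact H].
        exfalso. destruct H as [H|H]; [auto|]. apply (Hvnz x1 Hx1); auto. }
      intros x Hx. rewrite Hvd; auto. apply (Hdiv x ltac:(lra)).
      destruct (Rlt_or_le (v x) 0) as [H|H]; [exact H|exfalso].
      assert (Hvx : 0 < v x) by (destruct H as [H|H]; [exact H| exfalso; apply (Hvnz x Hx); auto]).
      destruct (Rlt_or_le x1 x) as [Hlt|Hle].
      * destruct (Ranalysis5.IVT_interv v x1 x) as [c [Hc Hvc0]]; auto.
        { intros a Ha. apply Hvc. lra. }
        apply (Hvnz c); [lra|exact Hvc0].
      * destruct (Req_dec x x1) as [->|Hne]; [lra|].
        destruct (Ranalysis5.IVT_interv (fun y => - v y) x x1) as [c [Hc Hvc0]]; [| lra | lra | lra |].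
        { intros a Ha. apply continuity_pt_opp. apply Hvc. lra. }
        apply (Hvnz c); [lra|lra].
  -
    left. split.
    + intros x Hx. rewrite Hz'; auto. apply (Hsgn x (Pf M r x) ltac:(lra)). auto.
    + intros x Hx. apply ubounds; try lra. apply Hpos; auto. apply Hp; auto.
Qed.
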